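(* Let $n,t'$ be positive integers and $\sigma\in\mathcal{S}_{n+t'}$. Then the symbol $n+t'+1$ can be inserted at some position of $\sigma$ to obtain a permutation $\sigma'\in\mathcal{S}_{n+t'+1}$ such that $\sum_{i=1}^{t'+1}\sigma'^{-1}(n+i)\equiv 0\pmod{n+1}$.
   Context: $\mathcal{S}_N$ is the set of permutations of $[N]=\{1,\ldots,N\}$ written as sequences; $\sigma'^{-1}(k)$ denotes the position of the value $k$ in $\sigma'$. *)

(* Defs.v *)
From mathcomp Require Import all_boot.
Set Implicit Arguments. Unset Strict Implicit. Unset Printing Implicit Defensive.

(* A permutation of [N] = {1,...,N} written as a sequence (one-line notation). *)
Definition is_perm_seq (N : nat) (s : seq nat) : Prop := perm_eq s (iota 1 N).

(* Insert the symbol x into s so that it lands right after the first k entries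
   (i.e. at 1-based position k+1), 0 <= k <= size s. *)
Definition insert_at (k : nat) (x : nat) (s : seq nat) : seq nat :=
  take k s ++ x :: drop k s.

(* 1-based position of the value v in s (sigma^{-1}(v)). *)
Definition pos (s : seq nat) (v : nat) : nat := (index v s).+1.

(* Main.v *)
Require Import Defs.
From mathcomp Require Import all_boot.
From mathcomp Require Import zify.

Lemma idx_ins k x s v : k <= size s -> v != x ->
  index v (insert_at k x s) = index v s + (k <= index v s).
Proof.
move=> ks vx; rewrite /insert_at.
have sz : size (take k s) = k by rewrite size_take_min; lia.
have ei : index v s = if v \in take k s then index v (take k s) else size (take k s) + index v (drop k s).
  by rewrite -{1}(cat_take_drop k s) index_cat.
rewrite ei index_cat /= eq_sym (negbTE vx).
case: ifP => H.
  have h : index v (take k s) < k by rewrite -[X in _ < X]sz index_mem.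
  by rewrite leqNgt h addn0.
by rewrite sz leq_addr addn1 addnS.
Qed.

Lemma idx_ins_x k x s : k <= size s -> x \notin s ->
  index x (insert_at k x s) = k.
Proof.
move=> ks xs; rewrite /insert_at index_cat.
have sz : size (take k s) = k by rewrite size_take_min; lia.
case: ifP => H; first by move: xs; rewrite -(cat_take_drop k s) mem_cat H.
by rewrite /= eqxx addn0 sz.
Qed.

Lemma ivt (g : nat -> nat) : (forall k, g k.+1 <= (g k).+1) ->
  forall b m, g 0 <= m <= g b -> exists k, k <= b /\ g k = m.
Proof.
move=> hg; elim=> [|b IH] m /andP [h1 h2].
  by exists 0; split=> //; apply/eqP; rewrite eqn_leq h1 h2.
case: (leqP m (g b)) => h.
  by have [k [? ?]] := IH m (introT andP (conj h1 h)); exists k; split=> //; lia.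
exists b.+1; split=> //; have := hg b; lia.
Qed.

Theorem lemma7 (n t' : nat) (sigma : seq nat) :
  0 < n -> 0 < t' -> is_perm_seq (n + t') sigma ->
  exists k : nat, k <= n + t' /\
    let sigma' := insert_at k (n + t').+1 sigma in
    is_perm_seq (n + t').+1 sigma' /\
    \sum_(1 <= i < t'.+2) pos sigma' (n + i) = 0 %[mod n.+1].
Proof.
move=> n0 t0 hp.
set N := n + t'.
have szs : size sigma = N by rewrite (perm_size hp) size_iota.
have Xs : N.+1 \notin sigma by rewrite (perm_mem hp) mem_iota; lia.
have inS : forall i, 0 < i <= t' -> index (n + i) sigma < N.
  move=> i hi; rewrite -szs index_mem (perm_mem hp) mem_iota; lia.
set C := \sum_(1 <= i < t'.+1) (index (n + i) sigma).+1 + 1.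
set g := fun k => \sum_(1 <= i < t'.+1) (k <= index (n + i) sigma) + k.
have Fk : forall k, k <= N ->
  \sum_(1 <= i < t'.+2) pos (insert_at k N.+1 sigma) (n + i) = C + g k.
  move=> k kN; rewrite big_nat_recr //= /pos.
  have -> : n + t'.+1 = N.+1 by rewrite /N addnS.
  rewrite idx_ins_x ?szs //.
  rewrite (eq_big_nat _ _ (F2 := fun i => (index (n+i) sigma).+1 + (k <= index (n + i) sigma))).
    by rewrite big_split /= /C /g; lia.
  move=> i hi; rewrite idx_ins ?szs //; last by apply/eqP; lia.
have g0 : g 0 = t'.
  rewrite /g addn0 (eq_big_nat _ _ (F2 := fun=> 1)) // sum_nat_const_nat; lia.
have gN : g N = N.
  rewrite /g (eq_big_nat _ _ (F2 := fun=> 0)) ?big1 //.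
  move=> i hi; have := inS i; lia.
have hg : forall k, g k.+1 <= (g k).+1.
  move=> k; rewrite /g -addnS leq_add2r; apply: leq_sum => i _; case: leqP; case: leqP => //; lia.
set m' := (C + t' + n) %/ n.+1 * n.+1.
have e1 := divn_eq (C + t' + n) n.+1.
have e2 := ltn_pmod (C + t' + n) (ltn0Sn n).
have hm1 : m' <= C + t' + n by rewrite /m'; lia.
have hm2 : C + t' + n < m' + n.+1 by rewrite /m'; lia.
have hr : g 0 <= m' - C <= g N by rewrite g0 gN /N; apply/andP; split; lia.
have [k [kN gk]] := @ivt g hg N (m' - C) hr.
exists k; split => //=; split.
  rewrite /is_perm_seq /insert_at.
  apply: (@perm_trans _ (N.+1 :: sigma)).
    by rewrite -[X in perm_eq _ (_ :: X)](cat_take_drop k sigma) -cat1s perm_catCA.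
  rewrite -[X in iota 1 X]addn1 iotaD -cat1s perm_catC add1n /=.
  by rewrite perm_cat2r.
rewrite Fk // gk.
have -> : C + (m' - C) = m' by lia.
by rewrite /m' modnMl mod0n.
Qed.
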